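(* Let $A,B\in\mathrm{SL}_2\mathbb{Z}$ be noncommuting, well oriented, with $2\le\mathrm{tr}(A)<\mathrm{tr}(B)$. For every $n\ge1$, any word $w$ of length $n$ such that $[w]$ is maximal among the values $[u]$ for words $u$ of length $n$ does not contain the factor $a^2$.
   Context: Words are finite strings over $\{a,b\}$; a factor is a contiguous subword; $\phi$ is the homomorphism with $\phi(a)=A,\phi(b)=B$, and $[w]=\mathrm{tr}(\phi(w))$. Fixed points are for the Möbius action on $\partial\mathcal{H}=\mathbb{P}^1\mathbb{R}$; $\alpha^\pm$ ($\beta^\pm$) are the attracting/repelling fixed points of $A$ ($B$), both equal to the unique fixed point if parabolic. With $\partial\mathcal{H}$ cyclically ordered and $[\alpha,\beta]$ the closed counterclockwise interval from $\alpha$ to $\beta$, let $I^+=\{\alpha^+\}$ if $\alpha^+=\beta^+$, and otherwise the one of $[\alpha^+,\beta^+],[\beta^+,\alpha^+]$ mapped into itself by both $A$ and $B$ (if it exists); define $I^-$ likewise with $A^{-1},B^{-1},\alpha^-,\beta^-$. The pair is coherently oriented if both exist, and well oriented if $A,B$ is coherently oriented but $A,B^{-1}$ is not. *)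

(* Defs.v *)
From HB Require Import structures.
From mathcomp Require Import all_boot all_order all_algebra.
From mathcomp Require Import reals Rstruct.
Set Implicit Arguments. Unset Strict Implicit. Unset Printing Implicit Defensive.
Import Order.TTheory GRing.Theory Num.Theory.
Local Open Scope ring_scope.

Definition word := seq bool.
Definition la : bool := false.
Definition lb : bool := true.

Definition phi (A B : 'M[int]_2) (w : word) : 'M[int]_2 :=
  foldr (fun c M => (if c then B else A) *m M) 1%:M w.

Definition trw (A B : 'M[int]_2) (w : word) : int := \tr (phi A B w).

(* ---------- The boundary of H: P^1(R) = R u {oo}, oo encoded by None ---------- *)
Section P1.
Variable R : realFieldType.

Definition P1 := option R.

Definition mob (M : 'M[R]_2) (p : P1) : P1 :=
  match p with
  | Some x => let den := M 1 0 * x + M 1 1 in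
              if den == 0 then None else Some ((M 0 0 * x + M 0 1) / den)
  | None => if M 1 0 == 0 then None else Some (M 0 0 / M 1 0)
  end.

Definition proj (v : 'cV[R]_2) : P1 :=
  if v 1 0 == 0 then None else Some (v 0 0 / v 1 0).

(* Attracting fixed point: the line of an eigenvector whose eigenvalue has
   maximal absolute value; repelling: minimal absolute value. For a parabolic
   matrix both are the unique fixed point. *)
Definition attracting (M : 'M[R]_2) (p : P1) : Prop :=
  exists (v : 'cV[R]_2) (l : R), [/\ v != 0, M *m v = l *: v, p = proj v &
    forall (w : 'cV[R]_2) (m : R), w != 0 -> M *m w = m *: w -> `|m| <= `|l|].

Definition repelling (M : 'M[R]_2) (p : P1) : Prop :=
  exists (v : 'cV[R]_2) (l : R), [/\ v != 0, M *m v = l *: v, p = proj v &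
    forall (w : 'cV[R]_2) (m : R), w != 0 -> M *m w = m *: w -> `|l| <= `|m|].

(* Closed counterclockwise interval [p, q] of P^1(R) (orientation of R u {oo}
   as the boundary of the upper half-plane: increasing on R). *)
Definition ccw_int (p q : P1) (x : P1) : bool :=
  match p, q with
  | Some a, Some b =>
      if a <= b then (if x is Some y then (a <= y) && (y <= b) else false)
      else (if x is Some y then (a <= y) || (y <= b) else true)
  | Some a, None => if x is Some y then a <= y else true
  | None, Some b => if x is Some y then y <= b else true
  | None, None => x == None
  end.

Definition maps_into_itself (M : 'M[R]_2) (I : P1 -> bool) : Prop :=
  forall x, I x -> I (mob M x).

Definition interval_exists (M N : 'M[R]_2) (p q : P1) : Prop :=
  p = q \/
  (maps_into_itself M (ccw_int p q) /\ maps_into_itself N (ccw_int p q)) \/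
  (maps_into_itself M (ccw_int q p) /\ maps_into_itself N (ccw_int q p)).

Definition coherently_oriented (M N : 'M[R]_2) : Prop :=
  exists ap am bp bm : P1,
    [/\ attracting M ap, repelling M am, attracting N bp & repelling N bm] /\
    interval_exists M N ap bp /\
    interval_exists (invmx M) (invmx N) am bm.

Definition well_oriented (M N : 'M[R]_2) : Prop :=
  coherently_oriented M N /\ ~ coherently_oriented M (invmx N).

End P1.

Definition toR (M : 'M[int]_2) : 'M[Rdefinitions.R]_2 := map_mx intr M.

(* Main.v *)
Require Import Defs.
From HB Require Import structures.
From mathcomp Require Import all_boot all_order all_algebra.
From mathcomp Require Import reals Rstruct.
From mathcomp Require Import ring lra zify.
Import Order.TTheory GRing.Theory Num.Theory.
Local Open Scope ring_scope.
Set Implicit Arguments. Unset Strict Implicit. Unset Printing Implicit Defensive.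

Section Basics.
Variable R : rcfType.
Implicit Types (M N : 'M[R]_2) (v w P Q : 'cV[R]_2).

Lemma lift2 (h : 'I_2) (i : 'I_1) : lift h i = if val h == 0%N then 1 else 0.
Proof. move: h i => [[|[|//]] hh] [[|//] ii]; by apply/val_inj. Qed.

Lemma det22 M : \det M = M 0 0 * M 1 1 - M 0 1 * M 1 0.
Proof.
rewrite (expand_det_row _ 0) !big_ord_recl big_ord0 /cofactor !det_mx11 !mxE /=.
rewrite !lift2 /= expr0 expr1; ring.
Qed.

Lemma tr22 M : \tr M = M 0 0 + M 1 1.
Proof. by rewrite /mxtrace !big_ord_recl big_ord0 addr0 !lift2. Qed.

Lemma mulmx22 M v i : (M *m v) i 0 = M i 0 * v 0 0 + M i 1 * v 1 0.
Proof. by rewrite !mxE !big_ord_recl big_ord0 addr0 !lift2. Qed.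

Definition vec2 (a b : R) : 'cV[R]_2 := \col_i (if val i == 0%N then a else b).
Lemma vec2E0 a b : vec2 a b 0 0 = a. Proof. by rewrite mxE. Qed.
Lemma vec2E1 a b : vec2 a b 1 0 = b. Proof. by rewrite mxE. Qed.

Lemma cV2P v w : v 0 0 = w 0 0 -> v 1 0 = w 1 0 -> v = w.
Proof.
move=> h0 h1; apply/matrixP => i j; rewrite (ord1 j).
by case: i => [[|[|//]] hi]; [rewrite (_ : Ordinal hi = 0) //| rewrite (_ : Ordinal hi = 1) //]; apply/val_inj.
Qed.

Lemma cV2_neq0 v : v != 0 -> v 0 0 != 0 \/ v 1 0 != 0.
Proof.
move=> hv; case: (eqVneq (v 0 0) 0) => h0; last by left.
case: (eqVneq (v 1 0) 0) => h1; last by right.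
suff : v = 0 by move=> hv0; move: hv; rewrite hv0 eqxx.
by apply: cV2P; rewrite mxE.
Qed.

Lemma cV2_neq0' v : v 0 0 != 0 \/ v 1 0 != 0 -> v != 0.
Proof. by case=> h; apply: contraNneq h => ->; rewrite mxE. Qed.

Definition D v w := v 1 0 * w 0 0 - v 0 0 * w 1 0.

Lemma D_mul M v w : D (M *m v) (M *m w) = \det M * D v w.
Proof. rewrite /D !mulmx22 det22; ring. Qed.

Lemma decomp P Q w : D P Q != 0 ->
  w = (D w Q / D P Q) *: P + (D P w / D P Q) *: Q.
Proof.
move=> hD; apply: cV2P; rewrite !mxE /D; field; exact: hD.
Qed.

Lemma proj_scale k v : k != 0 -> proj (k *: v) = proj v.
Proof.
move=> hk; rewrite /proj !mxE mulf_eq0 (negbTE hk) /=.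
case: eqP => // h; congr Some; field; apply/andP; split=> //; exact/eqP.
Qed.

Lemma proj_surj (x : P1 R) : exists w, w != 0 /\ x = proj w.
Proof.
case: x => [y|].
  exists (vec2 y 1); split; first by apply: cV2_neq0'; right; rewrite vec2E1 oner_neq0.
  by rewrite /proj vec2E1 oner_eq0 vec2E0 divr1.
exists (vec2 1 0); split; first by apply: cV2_neq0'; left; rewrite vec2E0 oner_neq0.
by rewrite /proj vec2E1 eqxx.
Qed.

Lemma mob_proj M w : w != 0 -> mob M (proj w) = proj (M *m w).
Proof.
move=> /cV2_neq0 hw; rewrite /proj !mulmx22 /mob.
case: (eqVneq (w 1 0) 0) => h1 /=.
  have h0 : w 0 0 != 0 by case: hw => //; rewrite h1 eqxx.
  rewrite h1 !mulr0 !addr0 mulf_eq0 (negbTE h0) orbF.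
  case: eqP => // hc; congr Some; field; apply/andP; split => //; exact/eqP.
set den := M 1 0 * (w 0 0 / w 1 0) + M 1 1.
have -> : M 1 0 * w 0 0 + M 1 1 * w 1 0 = den * w 1 0.
  by rewrite /den; field.
rewrite mulf_eq0 (negbTE h1) orbF.
case: eqP => // /eqP hd; congr Some.
rewrite -/den; move: hd; clearbody den => hd; field.
by rewrite hd h1.
Qed.


Lemma sqpos (x : R) : x != 0 -> 0 < x * x.
Proof. by move=> h; rewrite lt0r mulf_neq0 //= -expr2 sqr_ge0. Qed.

Lemma R1 (a b y : R) : a < b -> ((a <= y) && (y <= b)) = (0 <= (y - a) * (b - y)).
Proof.
move=> hab; apply/andP/idP => [[h1 h2]|h]; first nra.
split; nra.
Qed.

Lemma R2 (a b y : R) : b < a -> ((a <= y) || (y <= b)) = (0 <= (y - a) * (y - b)).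
Proof.
move=> hab; apply/orP/idP => [[h1|h2]|h]; try nra.
Qed.

Lemma posfac (k e E : R) : 0 < k -> E = k * e -> (0 <= E) = (0 <= e).
Proof. by move=> hk ->; rewrite pmulr_rge0. Qed.

Lemma ccwP P Q w : 0 < D P Q -> w != 0 ->
  ccw_int (proj P) (proj Q) (proj w) = (0 <= D P w * D w Q).
Proof.
rewrite /proj /D => + /cV2_neq0.
move: (P 0 0) (P 1 0) (Q 0 0) (Q 1 0) (w 0 0) (w 1 0) => p0 p1 q0 q1 w0 w1 hD hw.
case: (eqVneq p1 0) => hp1; case: (eqVneq q1 0) => hq1; case: (eqVneq w1 0) => hw1 /=;
  rewrite ?hp1 ?hq1 ?hw1 ?eqxx /= in hD hw *.
all: try lra.
- have hk : 0 < (- p0 * q1) * (w1 * w1) by apply: mulr_gt0; [lra | exact: sqpos].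
  rewrite (@posfac ((- p0 * q1) * (w1 * w1)) (q0 / q1 - w0 / w1) _ hk).
    by rewrite subr_ge0.
  by field; rewrite hq1 hw1.
- have hk : 0 < (p1 * q0) * (w1 * w1) by apply: mulr_gt0; [lra | exact: sqpos].
  rewrite (@posfac ((p1 * q0) * (w1 * w1)) (w0 / w1 - p0 / p1) _ hk).
    by rewrite subr_ge0.
  by field; rewrite hp1 hw1.
- have h0 : w0 != 0 by case: hw => //; rewrite eqxx.
  have hDe : p1 * q0 - p0 * q1 = p1 * q1 * (q0 / q1 - p0 / p1) by field; rewrite hp1 hq1.
  rewrite hDe in hD.
  have -> : (p1 * w0 - p0 * 0) * (0 * q0 - w0 * q1) = - ((p1 * q1) * (w0 * w0)) by ring.
  have hw0 := sqpos h0.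
  case: lerP => hab.
  + have hlt : 0 < q0 / q1 - p0 / p1.
      rewrite subr_gt0 lt_neqAle hab andbT; apply/negP => /eqP he.
      by move: hD; rewrite he subrr mulr0 ltxx.
    have hpq : 0 < p1 * q1 by move: hD; rewrite pmulr_lgt0.
    symmetry; apply/negbTE; rewrite -ltNge oppr_lt0; exact: mulr_gt0.
  + have hpq : p1 * q1 < 0 by move: hD; rewrite nmulr_lgt0 ?subr_lt0.
    symmetry; apply/idP; nra.
- have hDe : p1 * q0 - p0 * q1 = p1 * q1 * (q0 / q1 - p0 / p1) by field; rewrite hp1 hq1.
  rewrite hDe in hD.
  have hw2 := sqpos hw1.
  case: lerP => hab.
  + have hlt : 0 < q0 / q1 - p0 / p1.
      rewrite subr_gt0 lt_neqAle hab andbT; apply/negP => /eqP he.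
      by move: hD; rewrite he subrr mulr0 ltxx.
    have hpq : 0 < p1 * q1 by move: hD; rewrite pmulr_lgt0.
    rewrite (@posfac ((p1 * q1) * (w1 * w1)) ((w0 / w1 - p0 / p1) * (q0 / q1 - w0 / w1))).
    * apply: R1; by rewrite -subr_gt0.
    * exact: mulr_gt0.
    * by field; rewrite hp1 hq1 hw1.
  + have hpq : p1 * q1 < 0 by move: hD; rewrite nmulr_lgt0 ?subr_lt0.
    rewrite (@posfac (- (p1 * q1) * (w1 * w1)) ((w0 / w1 - p0 / p1) * (w0 / w1 - q0 / q1))).
    * exact: R2.
    * apply: mulr_gt0 => //; lra.
    * by field; rewrite hp1 hq1 hw1.
Qed.


Definition arc_of P Q : P1 R -> bool :=
  if 0 < D P Q then ccw_int (proj P) (proj Q) else ccw_int (proj Q) (proj P).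

Lemma Dswap v w : D v w = - D w v.
Proof. rewrite /D; ring. Qed.

Lemma arcP P Q w : D P Q != 0 -> w != 0 -> arc_of P Q (proj w) = (0 <= D P w * D w Q).
Proof.
move=> hD hw; rewrite /arc_of; case: ifP => h; first exact: ccwP.
rewrite ccwP //; last by rewrite Dswap oppr_gt0 lt_neqAle hD /= leNgt h.
by rewrite (Dswap Q w) (Dswap w P) mulrNN mulrC.
Qed.

Lemma unit_neq0 M w : M \in unitmx -> w != 0 -> M *m w != 0.
Proof.
move=> hM; apply: contraNneq => h.
by rewrite -(mulKmx hM w) h mulmx0.
Qed.

Lemma arc_inv M P Q a b c d : D P Q != 0 -> M \in unitmx ->
  M *m P = a *: P + b *: Q -> M *m Q = c *: P + d *: Q ->
  0 <= a -> 0 <= b -> 0 <= c -> 0 <= d ->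
  maps_into_itself M (arc_of P Q).
Proof.
move=> hD hM hP hQ ha hb hc hd x; have [w [hw ->]] := proj_surj x.
rewrite mob_proj // !arcP //; last exact: unit_neq0.
set al := D w Q / D P Q; set be := D P w / D P Q.
have hw' : w = al *: P + be *: Q by exact: decomp.
have E1 : D P (M *m w) = (al * b + be * d) * D P Q.
  by rewrite hw' mulmxDr -!scalemxAr hP hQ /D !mxE; ring.
have E2 : D (M *m w) Q = (al * a + be * c) * D P Q.
  by rewrite hw' mulmxDr -!scalemxAr hP hQ /D !mxE; ring.
have E3 : D P w * D w Q = (al * be) * (D P Q * D P Q).
  rewrite /al /be; field; exact: hD.
rewrite E1 E2 E3 => hab.
have hab' : 0 <= al * be.
  by move: hab; rewrite pmulr_lge0 // sqpos.
have -> : (al * b + be * d) * D P Q * ((al * a + be * c) * D P Q) =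
   ((al * al) * (a * b) + (al * be) * (b * c + a * d) + (be * be) * (c * d)) * (D P Q * D P Q) by ring.
apply: mulr_ge0; last by rewrite -expr2 sqr_ge0.
apply: addr_ge0; first apply: addr_ge0.
- by apply: mulr_ge0; [rewrite -expr2 sqr_ge0 | exact: mulr_ge0].
- by apply: mulr_ge0 => //; apply: addr_ge0; exact: mulr_ge0.
- by apply: mulr_ge0; [rewrite -expr2 sqr_ge0 | exact: mulr_ge0].
Qed.

Lemma ie_of M N P Q : (maps_into_itself M (arc_of P Q) /\ maps_into_itself N (arc_of P Q)) ->
  interval_exists M N (proj P) (proj Q).
Proof.
rewrite /arc_of /interval_exists; case: ifP => _ h; right; [left|right]; exact: h.
Qed.


Lemma ord2 (i : 'I_2) : i = 0 \/ i = 1.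
Proof. by case: i => [[|[|//]] hi]; [left|right]; apply/val_inj. Qed.

Lemma M2P M N : M 0 0 = N 0 0 -> M 0 1 = N 0 1 -> M 1 0 = N 1 0 -> M 1 1 = N 1 1 -> M = N.
Proof.
move=> h00 h01 h10 h11; apply/matrixP => i j.
by case: (ord2 i) => ->; case: (ord2 j) => ->.
Qed.

Lemma eig_char M w m : w != 0 -> M *m w = m *: w -> m ^+ 2 - \tr M * m + \det M = 0.
Proof.
move=> /cV2_neq0 hw hM.
have e0 : M 0 0 * w 0 0 + M 0 1 * w 1 0 = m * w 0 0 by rewrite -mulmx22 hM mxE.
have e1 : M 1 0 * w 0 0 + M 1 1 * w 1 0 = m * w 1 0 by rewrite -mulmx22 hM mxE.
rewrite tr22 det22.
set c := _ + _.
have h0 : c * w 0 0 = 0.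
  have -> : c * w 0 0 = (M 1 1 - m) * (M 0 0 * w 0 0 + M 0 1 * w 1 0 - m * w 0 0)
     - M 0 1 * (M 1 0 * w 0 0 + M 1 1 * w 1 0 - m * w 1 0) by rewrite /c; ring.
  by rewrite e0 e1 !subrr !mulr0 subrr.
have h1 : c * w 1 0 = 0.
  have -> : c * w 1 0 = (M 0 0 - m) * (M 1 0 * w 0 0 + M 1 1 * w 1 0 - m * w 1 0)
     - M 1 0 * (M 0 0 * w 0 0 + M 0 1 * w 1 0 - m * w 0 0) by rewrite /c; ring.
  by rewrite e0 e1 !subrr !mulr0 subrr.
case: hw => hw.
- by move/eqP: h0; rewrite mulf_eq0 (negbTE hw) orbF => /eqP.
- by move/eqP: h1; rewrite mulf_eq0 (negbTE hw) orbF => /eqP.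
Qed.

Lemma root_exists (t : R) : 2 <= t -> exists l, 1 <= l /\ l + l^-1 = t.
Proof.
move=> ht; set s := Num.sqrt (t ^+ 2 - 4).
have hs : 0 <= s by exact: sqrtr_ge0.
have hs2 : s ^+ 2 = t ^+ 2 - 4 by rewrite sqr_sqrtr //; nra.
exists ((t + s) / 2); split; first lra.
have -> : ((t + s) / 2)^-1 = (t - s) / 2.
  apply: (@mulIf _ ((t + s) / 2)); first by apply/negP => /eqP; lra.
  rewrite mulVf; last by apply/negP => /eqP; lra.
  have -> : (t - s) / 2 * ((t + s) / 2) = (t ^+ 2 - s ^+ 2) / 4 by field.
  by rewrite hs2; field.
by field.
Qed.

Lemma root_cases (t l m : R) : 1 <= l -> l + l^-1 = t -> m ^+ 2 - t * m + 1 = 0 -> m = l \/ m = l^-1.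
Proof.
move=> hl ht hm.
have hl0 : l != 0 by apply/negP => /eqP; lra.
have : (m - l) * (m - l^-1) = 0 by rewrite -hm -ht; field.
by move/eqP; rewrite mulf_eq0 !subr_eq0 => /orP [] /eqP; [left|right].
Qed.

Lemma linv_bounds (l : R) : 1 <= l -> 0 < l^-1 /\ l^-1 <= 1.
Proof.
move=> hl; have hl0 : 0 < l by lra.
split; first by rewrite invr_gt0.
by rewrite invf_le1.
Qed.

Lemma eig_vals M t l w m : \det M = 1 -> \tr M = t -> 1 <= l -> l + l^-1 = t ->
  w != 0 -> M *m w = m *: w -> m = l \/ m = l^-1.
Proof.
move=> hd ht hl hlt hw hM; apply: (@root_cases t l m hl hlt).
by rewrite -(eig_char hw hM) hd ht.
Qed.

Lemma eig_abs M t l w m : \det M = 1 -> \tr M = t -> 1 <= l -> l + l^-1 = t ->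
  w != 0 -> M *m w = m *: w -> l^-1 <= `|m| /\ `|m| <= l.
Proof.
move=> hd ht hl hlt hw hM; have [hi0 hi1] := linv_bounds hl.
case: (eig_vals hd ht hl hlt hw hM) => ->.
- rewrite ger0_norm; lra.
- rewrite ger0_norm; lra.
Qed.

Lemma attr M t l v : \det M = 1 -> \tr M = t -> 1 <= l -> l + l^-1 = t ->
  v != 0 -> M *m v = l *: v -> attracting M (proj v).
Proof.
move=> hd ht hl hlt hv hM; exists v, l; split => // w m hw hMw.
have [_ h] := eig_abs hd ht hl hlt hw hMw.
by rewrite (ger0_norm (x := l)) //; lra.
Qed.

Lemma repel M t l v : \det M = 1 -> \tr M = t -> 1 <= l -> l + l^-1 = t ->
  v != 0 -> M *m v = l^-1 *: v -> repelling M (proj v).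
Proof.
move=> hd ht hl hlt hv hM; exists v, l^-1; split => // w m hw hMw.
have [h _] := eig_abs hd ht hl hlt hw hMw.
have [hi0 _] := linv_bounds hl.
by rewrite (ger0_norm (x := l^-1)) //; lra.
Qed.

Lemma unit_det1 M : \det M = 1 -> M \in unitmx.
Proof. by move=> h; rewrite unitmxE h unitr1. Qed.

Lemma inv_eig M v m : \det M = 1 -> m != 0 -> M *m v = m *: v -> invmx M *m v = m^-1 *: v.
Proof.
move=> hd hm hM.
have hu := unit_det1 hd.
have : invmx M *m (M *m v) = v by rewrite mulKmx.
rewrite hM -scalemxAr => h.
by rewrite -{2}h scalerA mulVf // scale1r.
Qed.

Lemma inv_eig_rev M w m : \det M = 1 -> w != 0 -> invmx M *m w = m *: w -> m != 0 /\ M *m w = m^-1 *: w.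
Proof.
move=> hd hw hM; have hu := unit_det1 hd.
have h : M *m (invmx M *m w) = w by rewrite mulKVmx.
rewrite hM -scalemxAr in h.
have hm : m != 0.
  by apply: contraNneq hw => hm0; rewrite -h hm0 scale0r.
split => //.
by rewrite -{2}h scalerA mulVf // scale1r.
Qed.

Lemma attr_inv M t l v : \det M = 1 -> \tr M = t -> 1 <= l -> l + l^-1 = t ->
  v != 0 -> M *m v = l^-1 *: v -> attracting (invmx M) (proj v).
Proof.
move=> hd ht hl hlt hv hM; have [hi0 hi1] := linv_bounds hl.
exists v, l; split => //.
  by rewrite (inv_eig hd _ hM) ?invrK // invr_eq0; apply/negP => /eqP; lra.
move=> w m hw hMw; have [hm hMw'] := inv_eig_rev hd hw hMw.
case: (eig_vals hd ht hl hlt hw hMw') => /eqP; rewrite -(inj_eq invr_inj) invrK => /eqP ->.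
- rewrite !ger0_norm; lra.
- rewrite !ger0_norm ?invr_ge0; lra.
Qed.

Lemma repel_inv M t l v : \det M = 1 -> \tr M = t -> 1 <= l -> l + l^-1 = t ->
  v != 0 -> M *m v = l *: v -> repelling (invmx M) (proj v).
Proof.
move=> hd ht hl hlt hv hM; have [hi0 hi1] := linv_bounds hl.
exists v, l^-1; split => //.
  by rewrite (inv_eig hd _ hM) //; apply/negP => /eqP; lra.
move=> w m hw hMw; have [hm hMw'] := inv_eig_rev hd hw hMw.
case: (eig_vals hd ht hl hlt hw hMw') => /eqP; rewrite -(inj_eq invr_inj) invrK => /eqP ->.
- rewrite !ger0_norm ?invr_ge0; lra.
- rewrite !ger0_norm; lra.
Qed.

Lemma eigvec M l : l ^+ 2 - \tr M * l + \det M = 0 ->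
  M = l%:M \/ exists v, v != 0 /\ M *m v = l *: v.
Proof.
rewrite tr22 det22 => hc.
case: (eqVneq (vec2 (M 0 1) (l - M 0 0)) 0) => h1; last first.
  right; exists (vec2 (M 0 1) (l - M 0 0)); split => //.
  by apply: cV2P; rewrite mulmx22 !mxE /=; [ring | nra].
case: (eqVneq (vec2 (l - M 1 1) (M 1 0)) 0) => h2; last first.
  right; exists (vec2 (l - M 1 1) (M 1 0)); split => //.
  by apply: cV2P; rewrite mulmx22 !mxE /=; [nra | ring].
left.
have a1 : M 0 1 = 0 by move: (congr1 (fun v => v 0 0) h1); rewrite vec2E0 mxE.
have a2 : l - M 0 0 = 0 by move: (congr1 (fun v => v 1 0) h1); rewrite vec2E1 mxE.
have a3 : l - M 1 1 = 0 by move: (congr1 (fun v => v 0 0) h2); rewrite vec2E0 mxE.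
have a4 : M 1 0 = 0 by move: (congr1 (fun v => v 1 0) h2); rewrite vec2E1 mxE.
apply: M2P; rewrite !mxE /=; lra.
Qed.


Lemma D_scalel a v w : D (a *: v) w = a * D v w.
Proof. rewrite /D !mxE; ring. Qed.
Lemma D_scaler a v w : D v (a *: w) = a * D v w.
Proof. rewrite /D !mxE; ring. Qed.

Lemma tri M p r a : \det M = 1 -> a != 0 -> D p r != 0 -> M *m p = a *: p ->
  M *m r = (D (M *m r) r / D p r) *: p + a^-1 *: r.
Proof.
move=> hd ha hD hp.
have h := D_mul M p r; rewrite hd mul1r hp D_scalel in h.
rewrite {1}(decomp (M *m r) hD); congr (_ + _); congr (_ *: _).
apply: (mulfI ha); by rewrite mulrA h divff // mulfV.
Qed.

Lemma inv_from M z w : \det M = 1 -> M *m z = w -> invmx M *m w = z.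
Proof. by move=> hd <-; rewrite mulKmx // unit_det1. Qed.

Lemma mx_ext M N : (forall w, M *m w = N *m w) -> M = N.
Proof.
move=> f; apply/matrixP => i j; have := f (delta_mx j 0).
by rewrite -!colE => /matrixP /(_ i 0); rewrite !mxE.
Qed.

Lemma dep p q : D p q = 0 -> q != 0 -> exists k, p = k *: q.
Proof.
rewrite /D => h /cV2_neq0 [] hq.
- have e : p 1 0 * q 0 0 = p 0 0 * q 1 0 by apply/eqP; rewrite -subr_eq0 h.
  exists (p 0 0 / q 0 0); apply: cV2P; rewrite !mxE; first by field.
  by apply: (mulIf hq); rewrite e; field.
- have e : p 0 0 * q 1 0 = p 1 0 * q 0 0 by apply/eqP; rewrite -subr_eq0 -opprB h oppr0.
  exists (p 1 0 / q 1 0); apply: cV2P; rewrite !mxE; last by field.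
  by apply: (mulIf hq); rewrite e; field.
Qed.

Lemma trP Z p q a b c d : D p q != 0 -> Z *m p = a *: p + b *: q -> Z *m q = c *: p + d *: q ->
  \tr Z = a + d.
Proof.
move=> hD hp hq.
have h : \tr Z * D p q = D (Z *m p) q + D p (Z *m q) by rewrite tr22 /D !mulmx22; ring.
rewrite hp hq /D !mxE in h.
apply: (mulIf hD); rewrite h /D; ring.
Qed.

Lemma D0l w : D 0 w = 0. Proof. by rewrite /D !mxE; ring. Qed.
Lemma Dneq0l u w : D u w != 0 -> u != 0.
Proof. by apply: contraNneq => ->; rewrite D0l. Qed.
Lemma Dneq0r u w : D u w != 0 -> w != 0.
Proof. by apply: contraNneq => ->; rewrite /D !mxE; apply/eqP; ring. Qed.

Lemma ie_swap M N p q : interval_exists M N p q -> interval_exists M N q p.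
Proof. by rewrite /interval_exists => [[->|[h|h]]]; [left|right;right|right;left]. Qed.
Lemma ie_swapMN M N p q : interval_exists M N p q -> interval_exists N M p q.
Proof. by rewrite /interval_exists => [[->|[[h1 h2]|[h1 h2]]]]; [left|right;left|right;right]. Qed.

Lemma ie2 M N P Q a b c d k : D P Q != 0 -> M \in unitmx -> N \in unitmx ->
  M *m P = a *: P -> M *m Q = b *: Q -> N *m P = c *: P + k *: Q -> N *m Q = d *: Q ->
  0 <= a -> 0 <= b -> 0 <= c -> 0 <= d -> interval_exists M N (proj P) (proj Q).
Proof.
move=> hD hM hN hMP hMQ hNP hNQ ha hb hc hd.
case: (lerP 0 k) => hk.
  apply: ie_of; split.
    by apply: (arc_inv (a:=a) (b:=0) (c:=0) (d:=b)) => //; rewrite ?scale0r ?addr0 ?add0r.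
  by apply: (arc_inv (a:=c) (b:=k) (c:=0) (d:=d)) => //; rewrite ?scale0r ?addr0 ?add0r.
have n1 : (-1 : R) != 0 by rewrite oppr_eq0 oner_eq0.
rewrite -(proj_scale Q n1); apply: ie_of; split.
  apply: (arc_inv (a:=a) (b:=0) (c:=0) (d:=b)) => //.
  - by rewrite D_scaler mulf_neq0.
  - by rewrite scale0r addr0.
  - by rewrite -scalemxAr hMQ scale0r add0r !scalerA mulrC.
apply: (arc_inv (a:=c) (b:=-k) (c:=0) (d:=d)) => //.
- by rewrite D_scaler mulf_neq0.
- by rewrite hNP scalerA mulrNN mulr1.
- by rewrite -scalemxAr hNQ scale0r add0r !scalerA mulrC.
- lra.
Qed.

Lemma D_addl a b P Q w : D (a *: P + b *: Q) w = a * D P w + b * D Q w.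
Proof. rewrite /D !mxE; ring. Qed.
Lemma D_addr a b P Q w : D w (a *: P + b *: Q) = a * D w P + b * D w Q.
Proof. rewrite /D !mxE; ring. Qed.
Lemma Dvv v : D v v = 0.
Proof. rewrite /D; ring. Qed.

End Basics.

Definition phiR (R : rcfType) (A B : 'M[R]_2) (w : word) : 'M[R]_2 :=
  foldr (fun c M => (if c then B else A) *m M) 1%:M w.

Section Main.
Variable R : rcfType.
Variables (Ar Br : 'M[R]_2) (t s l m : R).
Hypotheses (hdA : \det Ar = 1) (hdB : \det Br = 1) (htA : \tr Ar = t) (htB : \tr Br = s)
  (hl : 1 <= l) (hlt : l + l^-1 = t) (hm : 1 <= m) (hms : m + m^-1 = s)
  (ht2 : 2 <= t) (hts : t + 1 <= s) (hnc : Ar *m Br != Br *m Ar).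

Ltac grab := have _hl := hl; have _hm := hm; have _ht2 := ht2; have _hts := hts; have _hlt := hlt; have _hms := hms.

Lemma l0 : l != 0. Proof. grab; apply/negP => /eqP e. lra. Qed.
Lemma m0 : m != 0. Proof. grab; apply/negP => /eqP e; lra. Qed.
Lemma linv : 0 < l^-1 /\ l^-1 <= 1. Proof. exact: linv_bounds. Qed.
Lemma minv : 0 < m^-1 /\ m^-1 <= 1. Proof. exact: linv_bounds. Qed.
Lemma m_gt1 : 1 < m.
Proof. grab; have [h0 h1] := minv; case: (ltrP 1 m) => // h; have e : m = 1 by lra.
move: hms; rewrite e invr1 => hs; lra. Qed.
Lemma mm1 : m^-1 < m.
Proof. grab; have [h0 h1] := minv; have := m_gt1. have : m^-1 < 1 by rewrite invf_lt1 ?m_gt1 //; lra. lra. Qed.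

Lemma notscalarA c : Ar != c%:M.
Proof. by apply: contraNneq hnc => ->; rewrite scalar_mxC. Qed.

Lemma notidA p r : D p r != 0 -> Ar *m p = p -> Ar *m r = r -> False.
Proof.
move=> hD hp hr; have : Ar = 1%:M.
  apply: mx_ext => w; rewrite mul1mx (decomp w hD) mulmxDr -!scalemxAr hp hr //.
by apply/eqP; exact: notscalarA.
Qed.

Lemma eqA_l1 : (l^-1) ^+ 2 - \tr Ar * l^-1 + \det Ar = 0.
Proof. rewrite htA hdA -hlt; field; exact: l0. Qed.
Lemma eqB_m1 : (m^-1) ^+ 2 - \tr Br * m^-1 + \det Br = 0.
Proof. rewrite htB hdB -hms; field; exact: m0. Qed.


Lemma l_eq1 : l = l^-1 -> l = 1.
Proof.
grab=> e; have h : l * l = 1 by rewrite {2}e mulfV // l0.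
nra.
Qed.

Lemma unitA : Ar \in unitmx. Proof. exact: unit_det1. Qed.
Lemma unitB : Br \in unitmx. Proof. exact: unit_det1. Qed.
Lemma unitAi : invmx Ar \in unitmx. Proof. by rewrite unitmx_inv unitA. Qed.
Lemma unitBi : invmx Br \in unitmx. Proof. by rewrite unitmx_inv unitB. Qed.

Lemma coh_dep p q : p != 0 -> q != 0 -> Ar *m p = l^-1 *: p -> Br *m q = m^-1 *: q ->
  D p q = 0 -> coherently_oriented Ar (invmx Br).
Proof.
move=> hp hq hAp hBq hD.
have [li0 li1] := linv; have [mi0 mi1] := minv; have hmm := mm1.
have [k hk] := dep hD hq.
have hBp : Br *m p = m^-1 *: p by rewrite hk -scalemxAr hBq !scalerA mulrC.
set r := vec2 (- p 1 0) (p 0 0).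
have hDr : D p r != 0.
  rewrite /D /r vec2E0 vec2E1; apply/negP => /eqP e.
  case: (cV2_neq0 hp) => h; have := sqpos h; nra.
clearbody r.
have hli0 : l^-1 != 0 by rewrite invr_eq0 l0.
have hmi0 : m^-1 != 0 by rewrite invr_eq0 m0.
set x := D (Ar *m r) r / D p r.
have hAr : Ar *m r = x *: p + l *: r by rewrite (tri hdA hli0 hDr hAp) invrK.
set z := D (Br *m r) r / D p r.
have hBr : Br *m r = z *: p + m *: r by rewrite (tri hdB hmi0 hDr hBp) invrK.
set u := x *: p + (l - l^-1) *: r.
set v := z *: p + (m - m^-1) *: r.
have hAu : Ar *m u = l *: u.
  rewrite /u mulmxDr -!scalemxAr hAp hAr; apply: cV2P; rewrite !mxE; field; exact: l0.
have hBv : Br *m v = m *: v.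
  rewrite /v mulmxDr -!scalemxAr hBp hBr; apply: cV2P; rewrite !mxE; field; exact: m0.
have hDv : D p v != 0.
  rewrite /v /D !mxE; apply/negP => /eqP e; move/eqP: hDr; apply.
  have hmm' : m - m^-1 != 0 by apply/negP => /eqP; lra.
  apply: (mulfI hmm'); rewrite mulr0 -e /D; ring.
have hv : v != 0 by exact: Dneq0r hDv.
have hiBp : invmx Br *m p = m *: p by rewrite (inv_eig hdB hmi0 hBp) invrK.
have hiAp : invmx Ar *m p = l *: p by rewrite (inv_eig hdA hli0 hAp) invrK.
have [hu Iplus] : u != 0 /\ interval_exists Ar (invmx Br) (proj u) (proj p).
  case: (eqVneq l l^-1) => hll.
    have l1 := l_eq1 hll.
    have hx : x != 0.
      apply/negP => /eqP hx0; apply: (notidA hDr).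
        by rewrite hAp -hll l1 scale1r.
      by rewrite hAr hx0 scale0r add0r l1 scale1r.
    have e0 : l - l^-1 = 0 by apply/eqP; rewrite subr_eq0; apply/eqP.
    have hue : u = x *: p by rewrite /u e0 scale0r addr0.
    split; first by rewrite hue scaler_eq0 negb_or hx.
    by left; rewrite hue proj_scale.
  have hDu : D u p != 0.
    rewrite /u /D !mxE; apply/negP => /eqP e; move/eqP: hDr; apply.
    have hll' : l - l^-1 != 0 by rewrite subr_eq0.
    apply: (mulfI hll'); rewrite mulr0 -oppr0 -e /D; ring.
  split; first exact: Dneq0l hDu.
  set c := x * (m - m^-1) - (l - l^-1) * z.
  have hiBu : invmx Br *m u = m^-1 *: u + c *: p.
    apply: inv_from => //; rewrite mulmxDr -!scalemxAr /u mulmxDr -!scalemxAr hBp hBr.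
    by apply: cV2P; rewrite !mxE /c; field; rewrite l0 m0.
  apply: (ie2 hDu unitA unitBi hAu hAp hiBu hiBp); grab; lra.
have Iminus : interval_exists (invmx Ar) (invmx (invmx Br)) (proj p) (proj v).
  rewrite invmxK; apply: ie_swap; apply: ie_swapMN.
  set c := z * (l - l^-1) - (m - m^-1) * x.
  have hiAv : invmx Ar *m v = l^-1 *: v + c *: p.
    apply: inv_from => //; rewrite mulmxDr -!scalemxAr /v mulmxDr -!scalemxAr hAp hAr.
    by apply: cV2P; rewrite !mxE /c; field; rewrite l0 m0.
  have hDv' : D v p != 0 by rewrite Dswap oppr_eq0.
  apply: (ie2 hDv' unitB unitAi hBv hBp hiAv hiAp); grab; lra.
exists (proj u), (proj p), (proj p), (proj v); split; last by split.
split.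
- exact: attr hdA htA hl hlt hu hAu.
- exact: repel hdA htA hl hlt hp hAp.
- exact: attr_inv hdB htB hm hms hp hBp.
- exact: repel_inv hdB htB hm hms hv hBv.
Qed.

Definition thr := (l - l^-1) * (m - m^-1).

Lemma indep p q : p != 0 -> q != 0 -> Ar *m p = l^-1 *: p -> Br *m q = m^-1 *: q ->
  D p q != 0 -> ~ coherently_oriented Ar (invmx Br) ->
  exists q' x y, [/\ D p q' != 0, Ar *m q' = x *: p + l *: q', Br *m p = m *: p + y *: q',
     Br *m q' = m^-1 *: q' & [/\ 0 < x, 0 < y & thr < x * y]].
Proof.
move=> hp hq hAp hBq hD hno.
have [li0 li1] := linv; have [mi0 mi1] := minv; have hmm := mm1.
have hli0 : l^-1 != 0 by rewrite invr_eq0 l0.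
have hmi0 : m^-1 != 0 by rewrite invr_eq0 m0.
have hDqp : D q p != 0 by rewrite Dswap oppr_eq0.
set x := D (Ar *m q) q / D p q.
have hAq : Ar *m q = x *: p + l *: q by rewrite (tri hdA hli0 hD hAp) invrK.
set y := D (Br *m p) p / D q p.
have hBp : Br *m p = m *: p + y *: q by rewrite (tri hdB hmi0 hDqp hBq) invrK addrC.
have hthr : 0 <= thr.
  rewrite /thr; apply: mulr_ge0; last lra.
  grab; have : l^-1 <= 1 <= l by rewrite li1 hl. move/andP => [? ?]; lra.
case: (lerP (x * y) thr) => hxy; last first.
  case: (eqVneq x 0) => hx0.
    by move: hxy; rewrite hx0 mul0r; lra.
  case: (lerP 0 x) => hx.
  - have hx' : 0 < x by rewrite lt_def hx0 hx.
    exists q, x, y; split => //; split => //; nra.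
  - exists ((-1) *: q), (- x), (- y); split.
    + by rewrite D_scaler mulN1r oppr_eq0.
    + by rewrite -scalemxAr hAq scalerDr !scalerA; apply: cV2P; rewrite !mxE; ring.
    + by rewrite hBp !scalerA mulrNN mulr1.
    + by rewrite -scalemxAr hBq !scalerA mulrC.
    + rewrite mulrNN; split => //; nra.
exfalso; apply: hno.
set u := x *: p + (l - l^-1) *: q.
set v := (m - m^-1) *: p + y *: q.
have hAu : Ar *m u = l *: u.
  rewrite /u mulmxDr -!scalemxAr hAp hAq; apply: cV2P; rewrite !mxE; field; exact: l0.
have hBv : Br *m v = m *: v.
  rewrite /v mulmxDr -!scalemxAr hBp hBq; apply: cV2P; rewrite !mxE; field; exact: m0.
have hiBq : invmx Br *m q = m *: q by rewrite (inv_eig hdB hmi0 hBq) invrK.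
have hiAp : invmx Ar *m p = l *: p by rewrite (inv_eig hdA hli0 hAp) invrK.
have [hu Iplus] : u != 0 /\ interval_exists Ar (invmx Br) (proj u) (proj q).
  case: (eqVneq x 0) => hx.
    case: (eqVneq l l^-1) => hll.
      exfalso; have l1 := l_eq1 hll; apply: (notidA hD).
        by rewrite hAp -hll l1 scale1r.
      by rewrite hAq hx scale0r add0r l1 scale1r.
    have hll' : l - l^-1 != 0 by rewrite subr_eq0.
    have hue : u = (l - l^-1) *: q by rewrite /u hx scale0r add0r.
    split; first by rewrite hue scaler_eq0 negb_or hll'.
    by left; rewrite hue proj_scale.
  have hDu : D u q != 0 by rewrite /u D_addl Dvv mulr0 addr0 mulf_neq0.
  split; first exact: Dneq0l hDu.
  have hiBu : invmx Br *m u = m^-1 *: u + (thr - x * y) *: q.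
    apply: inv_from => //; rewrite mulmxDr -!scalemxAr /u mulmxDr -!scalemxAr hBp hBq.
    by apply: cV2P; rewrite !mxE /thr; field; rewrite l0 m0.
  apply: ie_of; split.
    have e1 : Ar *m u = l *: u + 0 *: q by rewrite scale0r addr0.
    have e2 : Ar *m q = 1 *: u + l^-1 *: q.
      by rewrite hAq /u scale1r; apply: cV2P; rewrite !mxE; field; rewrite l0.
    apply: (arc_inv hDu unitA e1 e2); grab; lra.
  have e3 : invmx Br *m q = 0 *: u + m *: q by rewrite scale0r add0r.
  apply: (arc_inv hDu unitBi hiBu e3); grab; lra.
have [hv Iminus] : v != 0 /\ interval_exists (invmx Ar) Br (proj p) (proj v).
  case: (eqVneq y 0) => hy.
    have hmm' : m - m^-1 != 0 by apply/negP => /eqP; lra.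
    have hve : v = (m - m^-1) *: p by rewrite /v hy scale0r addr0.
    split; first by rewrite hve scaler_eq0 negb_or hmm'.
    by left; rewrite hve proj_scale.
  have hDv : D p v != 0 by rewrite /v D_addr Dvv mulr0 add0r mulf_neq0.
  split; first exact: Dneq0r hDv.
  have hiAv : invmx Ar *m v = (thr - x * y) *: p + l^-1 *: v.
    apply: inv_from => //; rewrite mulmxDr -!scalemxAr /v mulmxDr -!scalemxAr hAp hAq.
    by apply: cV2P; rewrite !mxE /thr; field; rewrite l0 m0.
  apply: ie_of; split.
    have e1 : invmx Ar *m p = l *: p + 0 *: v by rewrite scale0r addr0.
    apply: (arc_inv hDv unitAi e1 hiAv); grab; lra.
  have e2 : Br *m p = m^-1 *: p + 1 *: v.
    by rewrite hBp /v scale1r; apply: cV2P; rewrite !mxE; field; rewrite m0.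
  have e3 : Br *m v = 0 *: p + m *: v by rewrite scale0r add0r.
  apply: (arc_inv hDv unitB e2 e3); grab; lra.
exists (proj u), (proj p), (proj q), (proj v); split; last first.
  by split => //; rewrite invmxK.
split.
- exact: attr hdA htA hl hlt hu hAu.
- exact: repel hdA htA hl hlt hp hAp.
- exact: attr_inv hdB htB hm hms hq hBq.
- exact: repel_inv hdB htB hm hms hv hBv.
Qed.

Section Good.
Variables (p q : 'cV[R]_2) (x y : R).
Hypotheses (hD : D p q != 0) (hAp : Ar *m p = l^-1 *: p) (hAq : Ar *m q = x *: p + l *: q)
  (hBp : Br *m p = m *: p + y *: q) (hBq : Br *m q = m^-1 *: q) (hx : 0 < x) (hy : 0 < y).

Definition pos (Y : 'M[R]_2) := exists a b c d, [/\ 0 < a, 0 <= b, 0 <= c, 0 <= d &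
   (Y *m p = a *: p + b *: q /\ Y *m q = c *: p + d *: q)].

Ltac grab2 := grab; have _hx := hx; have _hy := hy.

Lemma pos_mul Y Z : pos Y -> pos Z -> pos (Y *m Z).
Proof.
move=> [a [b [c [d [ha hb hc hd [hYp hYq]]]]]] [a' [b' [c' [d' [ha' hb' hc' hd' [hZp hZq]]]]]].
exists (a' * a + b' * c), (a' * b + b' * d), (c' * a + d' * c), (c' * b + d' * d); split; [| | | |split].
- have := mulr_gt0 ha' ha; have := mulr_ge0 hb' hc; lra.
- by apply: addr_ge0; apply: mulr_ge0 => //; exact: ltW.
- by apply: addr_ge0; apply: mulr_ge0 => //; exact: ltW.
- by apply: addr_ge0; apply: mulr_ge0.
- rewrite -mulmxA hZp mulmxDr -!scalemxAr hYp hYq; apply: cV2P; rewrite !mxE; ring.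
- rewrite -mulmxA hZq mulmxDr -!scalemxAr hYp hYq; apply: cV2P; rewrite !mxE; ring.
Qed.

Lemma pos_tr Z : pos Z -> 0 < \tr Z.
Proof.
move=> [a [b [c [d [ha hb hc hd [hp hq]]]]]]; rewrite (trP hD hp hq).
lra.
Qed.

Lemma pos1 : pos 1%:M.
Proof.
exists 1, 0, 0, 1; split => //; split; rewrite mul1mx scale0r scale1r ?addr0 ?add0r //.
Qed.

Lemma posA : pos Ar.
Proof.
have [li0 li1] := linv.
grab2; exists l^-1, 0, x, l; split => //; try split; rewrite ?scale0r ?addr0 //; lra.
Qed.

Lemma posB : pos Br.
Proof.
have [mi0 mi1] := minv.
grab2; exists m, y, 0, m^-1; split => //; try split; rewrite ?scale0r ?add0r //; lra.
Qed.

Lemma pos_phi w : pos (phiR Ar Br w).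
Proof.
elim: w => [|c w IH] /=; first exact: pos1.
by apply: pos_mul => //; case: c; [exact: posB | exact: posA].
Qed.

Lemma posN : l ^+ 2 - l * m^-1 <= x * y -> pos ((Br - Ar) *m Ar).
Proof.
move=> hb; have [li0 li1] := linv; have [mi0 mi1] := minv; grab2.
have hmt : l + l^-1 <= m by lra.
exists (l^-1 * (m - l^-1)), (l^-1 * y), (x * (m - l^-1 - l)), (x * y + l * m^-1 - l ^+ 2); split; [| | | |split].
- apply: mulr_gt0 => //; have := m_gt1; lra.
- by apply: mulr_ge0; [exact: ltW | exact: ltW].
- by apply: mulr_ge0; [exact: ltW | lra].
- lra.
- rewrite -mulmxA hAp -scalemxAr mulmxBl hBp hAp; apply: cV2P; rewrite !mxE; ring.
- rewrite -mulmxA hAq mulmxDr -!scalemxAr mulmxBl mulmxBl hBp hAp hBq hAq.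
  apply: cV2P; rewrite !mxE; ring.
Qed.

Lemma trAB : \tr (Ar *m Br) = m * l^-1 + x * y + m^-1 * l.
Proof.
have e1 : Ar *m Br *m p = (m * l^-1 + y * x) *: p + (y * l) *: q.
  rewrite -mulmxA hBp mulmxDr -!scalemxAr hAp hAq; apply: cV2P; rewrite !mxE; ring.
have e2 : Ar *m Br *m q = (m^-1 * x) *: p + (m^-1 * l) *: q.
  rewrite -mulmxA hBq -!scalemxAr hAq; apply: cV2P; rewrite !mxE; ring.
rewrite (trP hD e1 e2); ring.
Qed.

End Good.

Lemma xy_bound p q x y : D p q != 0 -> Ar *m p = l^-1 *: p -> Ar *m q = x *: p + l *: q ->
  Br *m p = m *: p + y *: q -> Br *m q = m^-1 *: q -> thr < x * y ->
  (t = 2 \/ 3 <= t) -> (0 < \tr (Ar *m Br) - s -> 1 <= \tr (Ar *m Br) - s) ->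
  l ^+ 2 - l * m^-1 <= x * y.
Proof.
move=> hD hAp hAq hBp hBq hxy ht23 hint.
have [li0 li1] := linv; have [mi0 mi1] := minv; grab.
have hll : l * l^-1 = 1 by rewrite mulfV // l0.
have hmm : m * m^-1 = 1 by rewrite mulfV // m0.
move: hxy; rewrite /thr => hxy.
case: ht23 => ht.
- have l1 : l = 1.
    have : (l - 1) * (l - 1) = 0 by nra.
    by move/eqP; rewrite mulf_eq0 orbb subr_eq0 => /eqP.
  move: hxy hll; rewrite l1 invr1 subrr mul0r => hxy _.
  have := trAB hD hAp hAq hBp hBq; rewrite l1 invr1 => htr.
  have h1 : 1 <= \tr (Ar *m Br) - s by apply: hint; rewrite htr; lra.
  rewrite htr in h1; lra.
- set li := l^-1 in li0 li1 hll hxy _hlt *; set mi := m^-1 in mi0 mi1 hmm hxy _hms *.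
  have hl2 : 2 <= l by nra.
  have hli : li <= 1/2 by nra.
  have hm2 : 2 <= m by nra.
  have hmi : mi <= 1/2 by nra.
  have h1 : (l + li + 1 - mi) * (l - li) <= m * (l - li) by nra.
  have h2 : 3/4 <= (1 - mi) * (l - li) by nra.
  have h3 : li * li <= 1/4 by nra.
  have h4 : 0 <= li * mi by nra.
  nra.
Qed.

Lemma notscalarB c : Br != c%:M.
Proof. by apply: contraNneq hnc => ->; rewrite scalar_mxC. Qed.

Lemma key : ~ coherently_oriented Ar (invmx Br) -> (t = 2 \/ 3 <= t) ->
  (0 < \tr (Ar *m Br) - s -> 1 <= \tr (Ar *m Br) - s) ->
  forall w, 0 < \tr ((Br - Ar) *m Ar *m phiR Ar Br w).
Proof.
move=> hno ht23 hint w.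
case: (eigvec eqA_l1) => [hs|[p [hp hAp]]]; first by move/eqP: (notscalarA (l^-1)); rewrite hs.
case: (eigvec eqB_m1) => [hs|[q [hq hBq]]]; first by move/eqP: (notscalarB (m^-1)); rewrite hs.
case: (eqVneq (D p q) 0) => hD.
  by exfalso; apply: hno; exact: coh_dep hp hq hAp hBq hD.
have [q' [x [y [hD' hAq hBp hBq' [hx hy hxy]]]]] := indep hp hq hAp hBq hD hno.
have hb := xy_bound hD' hAp hAq hBp hBq' hxy ht23 hint.
apply: (pos_tr hD'); apply: pos_mul.
  exact: (posN hAp hAq hBp hBq' hx hy hb).
exact: (pos_phi hAp hAq hBp hBq' hx hy).
Qed.

End Main.

Lemma phiR_cat (R : rcfType) (A B : 'M[R]_2) u v : phiR A B (u ++ v) = phiR A B u *m phiR A B v.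
Proof. elim: u => [|c u IH] /=; first by rewrite mul1mx. by rewrite IH mulmxA. Qed.

Lemma phi_map (A B : 'M[int]_2) w :
  map_mx (intr : int -> Rdefinitions.R) (phi A B w) = phiR (toR A) (toR B) w.
Proof.
elim: w => [|c w IH] /=; first by rewrite map_mx1.
by rewrite map_mxM IH; case: c.
Qed.

Lemma tr_map (M : 'M[int]_2) : \tr (toR M) = (\tr M)%:~R.
Proof. by rewrite /toR /mxtrace rmorph_sum; apply: eq_bigr => i _; rewrite mxE. Qed.

Lemma trw_R (A B : 'M[int]_2) w : (trw A B w)%:~R = \tr (phiR (toR A) (toR B) w) :> Rdefinitions.R.
Proof. by rewrite /trw -phi_map -tr_map. Qed.

Theorem lemma5p5 (A B : 'M[int]_2) :
  \det A = 1 -> \det B = 1 ->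
  A *m B != B *m A ->
  well_oriented (toR A) (toR B) ->
  2 <= \tr A -> \tr A < \tr B ->
  forall (n : nat), (1 <= n)%N ->
  forall w : word, size w = n ->
    (forall u : word, size u = n -> trw A B u <= trw A B w) ->
    ~~ infix [:: la; la] w.
Proof.
move=> hdA hdB hnc [_ hwo] ht2 htAB n hn w hsz hmax.
apply/negP => /infixP [w1 [w2 hw]].
set u := w1 ++ [:: lb; la] ++ w2.
have hu : size u = n by rewrite -hsz hw /u !size_cat.
have := hmax u hu; apply/negP; rewrite -ltNge.
pose Ar := toR A; pose Br := toR B.
set t : Rdefinitions.R := (\tr A)%:~R; set s : Rdefinitions.R := (\tr B)%:~R.
have hdAr : \det Ar = 1 by rewrite /Ar /toR det_map_mx hdA rmorph1.
have hdBr : \det Br = 1 by rewrite /Br /toR det_map_mx hdB rmorph1.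
have htA : \tr Ar = t by rewrite tr_map.
have htB : \tr Br = s by rewrite tr_map.
have ht2r : 2 <= t by rewrite /t (_ : 2 = 2%:~R) // ler_int.
have htsr : t + 1 <= s.
  rewrite /t /s -(rmorph1 (intr : int -> Rdefinitions.R)) -rmorphD ler_int; lia.
have hncr : Ar *m Br != Br *m Ar.
  apply: contraNneq hnc => e; apply/eqP.
  apply/matrixP => i j; move/matrixP/(_ i j): e.
  by rewrite /Ar /Br /toR -!map_mxM !mxE => /eqP; rewrite eqr_int => /eqP.
have ht23 : t = 2 \/ 3 <= t.
  case: (eqVneq (\tr A) 2) => e; first by left; rewrite /t e.
  by right; rewrite /t (_ : 3 = 3%:~R) // ler_int; lia.
have hint : 0 < \tr (Ar *m Br) - s -> 1 <= \tr (Ar *m Br) - s.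
  rewrite -map_mxM tr_map /s -rmorphB ltr0z ler1z; lia.
have [l [hl hlt]] := root_exists ht2r.
have [m [hm hms]] : exists m, 1 <= m /\ m + m^-1 = s by apply: root_exists; lra.
have K := key hdAr hdBr htA htB hl hlt hm hms ht2r htsr hncr hwo ht23 hint (w2 ++ w1).
rewrite -(ltr_int Rdefinitions.R) !trw_R -/Ar -/Br -subr_gt0.
rewrite hw /u !phiR_cat /= !mulmx1 -raddfB /= -mulmxBr -mulmxBl -mulmxBl.
move: K; rewrite phiR_cat !mulmxA -mulmxA mxtrace_mulC !mulmxA => K.
by rewrite mxtrace_mulC !mulmxA.
Qed.
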